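(* Let $n\ge1$ be an integer, let $\rho_{\mathrm{enc}}^{(n)}$ be the encrypted-cloning encoded state on qubits $A,S_1,N_1,\dots,S_n,N_n$ (defined in the context), let $\mathcal R_n=\{S_1,N_1,\dots,S_n,N_n\}$ and let $B\subseteq\mathcal R_n$. Then: (i) If $B$ misses one or more complete pairs $\{S_i,N_i\}$ (which necessarily happens if $|B|<n$), then $B$ is completely uninformative. (ii) If $B$ contains at least one qubit from each pair $\{S_i,N_i\}$ (so $|B|\ge n$), then: if $|B|>n$, $B$ is authorized; if $|B|=n$, let $p$ be the number of signal qubits $S_i$ in $B$; then $B$ is completely uninformative when $n$ is even, completely uninformative when $n$ is odd and $p$ is even, and partially informative when $n$ is odd and $p$ is odd. In the partially informative case the reduced state is $$\rho_B=\frac{1}{2^n}\Big(I^{\otimes n}+(-1)^{(n-1)/2}\,y\,Y^{\otimes n}\Big),$$ where $y=\bra{\psi}Y\ket{\psi}$.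
   Context: Pauli operators: $\sigma_0=I,\sigma_1=X,\sigma_2=Y,\sigma_3=Z$. An input qubit $A$ is prepared in an arbitrary pure state $\ket{\psi}_A$, with Bloch components $x=\bra\psi X\ket\psi$, $y=\bra\psi Y\ket\psi$, $z=\bra\psi Z\ket\psi$. For $i=1,\dots,n$, the signal qubit $S_i$ and noise qubit $N_i$ are prepared in the Bell state $\ket{\phi}_{S_iN_i}=\frac{1}{\sqrt2}(\ket{00}+\ket{11})$. Set $\alpha_0=1$, $\alpha_1=\alpha_3=i$, $\alpha_2=-i^{\,n+1}$, and define the unitary $U_{\mathrm{enc}}^{(n)}=\frac12\sum_{\mu=0}^3\alpha_\mu^{-1}\sigma_\mu^{(A)}\otimes\bigotimes_{i=1}^n\sigma_\mu^{(S_i)}$ (acting as identity on the $N_i$). The encoded state is $\ket{\Psi_{\mathrm{enc}}}=U_{\mathrm{enc}}^{(n)}\big[\ket{\psi}_A\otimes\bigotimes_{i=1}^n\ket{\phi}_{S_iN_i}\big]$ and $\rho_{\mathrm{enc}}^{(n)}=\ket{\Psi_{\mathrm{enc}}}\bra{\Psi_{\mathrm{enc}}}$. For $B\subseteq\mathcal R_n$, the reduced state $\rho_B(\psi)$ is obtained from $\rho_{\mathrm{enc}}^{(n)}$ by tracing out $A$ and all qubits of $\mathcal R_n\setminus B$; in $Y^{\otimes n}$ and $I^{\otimes n}$ the tensor factors act on the $n$ qubits of $B$. $B$ is completely uninformative if $\rho_B(\psi)$ is independent of $\ket\psi$, and partially informative if it is not authorized and $\rho_B(\psi)$ depends nontrivially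 on $\ket\psi$. $B$ is authorized if it contains one complete pair $\{S_j,N_j\}$ and at least one qubit from each of the remaining $n-1$ pairs (such subsets allow perfect recovery of $\ket\psi$). *)

(* Defs.v *)
(* Complex scalars: an arbitrary numClosedFieldType C
   (e.g. R[i] for R : realType), so the statement covers the complex numbers. *)
From HB Require Import structures.
From mathcomp Require Import all_boot all_order all_algebra all_field.
Set Implicit Arguments. Unset Strict Implicit. Unset Printing Implicit Defensive.
Import Order.TTheory GRing.Theory Num.Theory.
Local Open Scope ring_scope.

Definition qubit (n : nat) := option ('I_n * bool)%type.
Definition qA (n : nat) : qubit n := None.
Definition qS (n : nat) (i : 'I_n) : qubit n := Some (i, false).
Definition qN (n : nat) (i : 'I_n) : qubit n := Some (i, true).

(* Computational-basis configurations of all 2n+1 qubits (false = |0>, true = |1>). *)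
Definition config (n : nat) := {ffun qubit n -> bool}.

Section Encoding.
Variable C : numClosedFieldType.

(* Pauli matrix sigma_mu, entry <a| sigma_mu |b>. *)
Definition pauli (mu : nat) (a b : bool) : C :=
  match mu with
  | 0%N => (a == b)%:R
  | 1%N => (a != b)%:R
  | 2%N => if a == b then 0 else if a then 'i else - 'i
  | _ => if a == b then (if a then -1 else 1) else 0
  end.

(* a single-qubit pure state psi = psi false |0> + psi true |1> *)
Definition normalized (psi : bool -> C) : Prop :=
  `|psi false| ^+ 2 + `|psi true| ^+ 2 = 1.

Definition blochY (psi : bool -> C) : C :=
  \sum_(a : bool) \sum_(b : bool) (psi a)^* * pauli 2 a b * psi b.

Definition alpha (n mu : nat) : C :=
  match mu with
  | 0%N => 1
  | 1%N => 'i
  | 2%N => - ('i ^+ n.+1)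
  | _ => 'i
  end.

Definition enc_site (n mu : nat) (q : qubit n) : nat :=
  match q with
  | Some (_, true) => 0%N
  | _ => mu
  end.

Definition Uenc (n : nat) (x y : config n) : C :=
  2^-1 * \sum_(mu < 4) (alpha n mu)^-1 *
           \prod_(q : qubit n) pauli (enc_site mu q) (x q) (y q).

Definition init_state (n : nat) (psi : bool -> C) (x : config n) : C :=
  psi (x (qA n)) * \prod_(i < n) ((x (qS i) == x (qN i))%:R / sqrtC 2).

Definition enc_state (n : nat) (psi : bool -> C) (x : config n) : C :=
  \sum_(y : config n) Uenc x y * init_state psi y.

Definition rho_enc (n : nat) (psi : bool -> C) (x y : config n) : C :=
  enc_state psi x * (enc_state psi y)^*.

Definition merge (n : nat) (B : {set qubit n}) (u c : config n) : config n :=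
  [ffun q => if q \in B then u q else c q].

(* It is encoded as
   a function of two full configurations u, v which depends only on the values
   of u, v on B (the entries <u|_B rho_B |v|_B>). *)
Definition reduced (n : nat) (psi : bool -> C) (B : {set qubit n}) (u v : config n) : C :=
  \sum_(c : config n | [forall q, (q \in B) ==> ~~ c q])
     rho_enc psi (merge B u c) (merge B v c).

Definition uninformative (n : nat) (B : {set qubit n}) : Prop :=
  forall psi psi' : bool -> C, normalized psi -> normalized psi' ->
    forall u v : config n, reduced psi B u v = reduced psi' B u v.

End Encoding.

Definition authorized (n : nat) (B : {set qubit n}) : Prop :=
  exists j : 'I_n, qS j \in B /\ qN j \in B /\
    (forall i : 'I_n, qS i \in B \/ qN i \in B).

Definition partially_informative (C : numClosedFieldType) (n : nat)
    (B : {set qubit n}) : Prop :=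
  ~ authorized B /\
  exists psi psi' : bool -> C, normalized psi /\ normalized psi' /\
    exists u v : config n, reduced psi B u v <> reduced psi' B u v.

(* Main.v *)
Require Import Defs.
From HB Require Import structures.
From mathcomp Require Import all_boot all_order all_algebra all_field.
From mathcomp Require Import ring zify.
Set Implicit Arguments. Unset Strict Implicit. Unset Printing Implicit Defensive.
Import Order.TTheory GRing.Theory Num.Theory.
Local Open Scope ring_scope.

Lemma big_opt (R : Type) (idx : R) (op : Monoid.com_law idx) (T : finType) (F : option T -> R) :
  \big[op/idx]_(q : option T) F q = op (F None) (\big[op/idx]_(x : T) F (Some x)).
Proof.
rewrite (bigD1 None) //=; congr (op _ _).
rewrite (@reindex_omap _ op idx _ _ Some id) /=.
  by apply: eq_bigl => x; rewrite eqxx.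
by case.
Qed.

Lemma prod_qubit (C : numClosedFieldType) n (F : qubit n -> C) :
  \prod_(q : qubit n) F q = F None * \prod_(i < n) (F (qS i) * F (qN i)).
Proof.
rewrite big_opt; congr (_ * _).
rewrite (eq_bigr (fun i => \prod_(b : bool) F (Some (i, b)))); last first.
  by move=> i _; rewrite big_bool mulrC.
rewrite pair_big /=; apply: eq_bigr => -[i b] _ //.
Qed.

Definition to_cfg n (bd : bool * {ffun 'I_n -> bool * bool}) : config n :=
  [ffun q => match q with None => bd.1 | Some (i, t) => if t then (bd.2 i).2 else (bd.2 i).1 end].
Definition of_cfg n (c : config n) : bool * {ffun 'I_n -> bool * bool} :=
  (c None, [ffun i => (c (qS i), c (qN i))]).

Lemma sum_config (C : numClosedFieldType) n (f : bool -> C) (g : 'I_n -> bool -> bool -> C) :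
  \sum_(c : config n) f (c None) * \prod_(i < n) g i (c (qS i)) (c (qN i)) =
  (\sum_b f b) * \prod_(i < n) \sum_s \sum_t g i s t.
Proof.
rewrite (reindex (@to_cfg n)); last first.
  exists (@of_cfg n) => [[b d]|c] _.
    rewrite /of_cfg /to_cfg ffunE /=; congr (_, _); apply/ffunP => i.
    by rewrite !ffunE /qS /qN; case: (d i).
  by apply/ffunP => -[[i []]|]; rewrite !ffunE.
have E i : \sum_s \sum_t g i s t = \sum_(st : bool * bool) g i st.1 st.2.
  by rewrite pair_bigA.
rewrite (_ : \prod_(i < n) \sum_s \sum_t g i s t =
   \sum_(d : {ffun 'I_n -> bool * bool}) \prod_i g i (d i).1 (d i).2); last first.
  by rewrite (eq_bigr _ (fun i _ => E i)) bigA_distr_bigA.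
rewrite big_distrl /=.
rewrite (eq_bigr (fun b => \sum_(d : {ffun 'I_n -> bool * bool}) f b * \prod_i g i (d i).1 (d i).2)); last first.
  by move=> b _; rewrite big_distrr.
rewrite pair_bigA; apply: eq_bigr => -[b d] _ /=.
rewrite ffunE /=; congr (_ * _); apply: eq_bigr => i _.
by rewrite !ffunE.
Qed.

Definition phi (C : numClosedFieldType) (psi : bool -> C) (mu : nat) (b : bool) : C :=
  \sum_a pauli C mu b a * psi a.

Lemma enc_formula (C : numClosedFieldType) n (psi : bool -> C) (x : config n) :
  enc_state psi x = 2^-1 * (sqrtC 2)^-1 ^+ n *
    \sum_(mu < 4) (alpha C n mu)^-1 * phi psi mu (x None) *
       \prod_(i < n) pauli C mu (x (qS i)) (x (qN i)).
Proof.
rewrite /enc_state /Uenc.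
under eq_bigr do rewrite -mulrA big_distrl /=.
rewrite -big_distrr /= exchange_big /= -mulrA; congr (_ * _).
rewrite big_distrr /=; apply: eq_bigr => mu _.
under eq_bigr do rewrite -mulrA.
rewrite -big_distrr /= -!mulrA mulrCA; congr (_ * _).
rewrite (eq_bigr (fun y : config n => (pauli C mu (x None) (y None) * psi (y None)) *
   \prod_(i < n) (pauli C mu (x (qS i)) (y (qS i)) * pauli C 0 (x (qN i)) (y (qN i)) *
       ((y (qS i) == y (qN i))%:R / sqrtC 2)))); last first.
  move=> y _; rewrite /init_state prod_qubit /= big_split /=.
  by rewrite /qA !big_split /=; ring.
rewrite (sum_config (fun a => pauli C mu (x None) a * psi a)
  (fun i s t => pauli C mu (x (qS i)) s * pauli C 0 (x (qN i)) t * ((s == t)%:R / sqrtC 2))).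
rewrite /phi mulrCA; congr (_ * _).
have -> : (sqrtC 2)^-1 ^+ n = \prod_(i < n) (sqrtC (2 : C))^-1 by rewrite prodr_const card_ord.
rewrite -big_split /=.
apply: eq_bigr => i _.
rewrite !big_bool /=.
case: (x (qS i)); case: (x (qN i)); case: mu => [[|[|[|[|//]]]] ?] /=; ring.
Qed.

Lemma forall_nat (C : numClosedFieldType) (T : finType) (P : pred T) :
  ([forall q, P q])%:R = \prod_q (P q)%:R :> C.
Proof.
case: (boolP [forall q, P q]) => H.
  by rewrite big1 // => q _; rewrite (forallP H).
move/forallPn: H => [q Hq]; rewrite (bigD1 q) //= (negbTE Hq) mul0r //.
Qed.

Definition mrg n (B : {set qubit n}) (w : config n) (q : qubit n) (b : bool) :=
  if q \in B then w q else b.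

Definition Tf (C : numClosedFieldType) n (B : {set qubit n}) (u v : config n) (mu nu : nat) (i : 'I_n) : C :=
  \sum_s \sum_t (((qS i \in B) ==> ~~ s)%:R * ((qN i \in B) ==> ~~ t)%:R *
    (pauli C mu (mrg B u (qS i) s) (mrg B u (qN i) t) *
     (pauli C nu (mrg B v (qS i) s) (mrg B v (qN i) t))^*)).

Definition Mm (C : numClosedFieldType) (psi : bool -> C) (mu nu : nat) : C :=
  \sum_b phi psi mu b * (phi psi nu b)^*.

Definition Kc (C : numClosedFieldType) n : C :=
  (2^-1 * (sqrtC 2)^-1 ^+ n) * (2^-1 * (sqrtC 2)^-1 ^+ n)^*.

Lemma reduced_formula (C : numClosedFieldType) n (psi : bool -> C) (B : {set qubit n}) (u v : config n) :
  qA n \notin B ->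
  reduced psi B u v = Kc C n * \sum_(mu < 4) \sum_(nu < 4)
     ((alpha C n mu)^-1 * ((alpha C n nu)^-1)^*) * Mm psi mu nu * \prod_(i < n) Tf C B u v mu nu i.
Proof.
move=> hA.
rewrite /reduced big_mkcond /=.
rewrite (eq_bigr (fun c : config n => Kc C n * \sum_(mu < 4) \sum_(nu < 4)
     ((alpha C n mu)^-1 * ((alpha C n nu)^-1)^*) *
     ((phi psi mu (c None) * (phi psi nu (c None))^*) *
      \prod_(i < n) (((qS i \in B) ==> ~~ c (qS i))%:R * ((qN i \in B) ==> ~~ c (qN i))%:R *
    (pauli C mu (mrg B u (qS i) (c (qS i))) (mrg B u (qN i) (c (qN i))) *
     (pauli C nu (mrg B v (qS i) (c (qS i))) (mrg B v (qN i) (c (qN i))))^*))))); last first.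
  move=> c _.
  have -> : forall (P : bool) (X : C), (if P then X else 0) = P%:R * X.
    by move=> [] X; rewrite ?mul1r ?mul0r.
  rewrite forall_nat prod_qubit (negbTE hA) /= mul1r.
  rewrite /rho_enc !enc_formula !ffunE (negbTE hA).
  have E : forall (X Y : C) (a b : 'I_4 -> C),
      (X * \sum_(mu < 4) a mu) * (Y * \sum_(nu < 4) b nu) =
      X * Y * \sum_(mu < 4) \sum_(nu < 4) (a mu * b nu).
    move=> X Y a b; rewrite mulrACA big_distrl; congr (_ * _).
    by apply: eq_bigr => mu _; rewrite big_distrr.
  rewrite rmorphM rmorph_sum /= E mulrCA /Kc; congr (_ * _).
  rewrite big_distrr; apply: eq_bigr => mu _.
  rewrite big_distrr; apply: eq_bigr => nu _.
  rewrite !rmorphM rmorph_prod /= !big_split /=.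
  have M w q : Defs.merge B w c q = mrg B w q (c q) by rewrite ffunE.
  have P1 : \prod_(i < n) pauli C mu (Defs.merge B u c (qS i)) (Defs.merge B u c (qN i)) =
    \prod_(i < n) pauli C mu (mrg B u (qS i) (c (qS i))) (mrg B u (qN i) (c (qN i))).
    by apply: eq_bigr => i _; rewrite !M.
  have P2 : \prod_(i < n) (pauli C nu (Defs.merge B v c (qS i)) (Defs.merge B v c (qN i)))^* =
    \prod_(i < n) (pauli C nu (mrg B v (qS i) (c (qS i))) (mrg B v (qN i) (c (qN i))))^*.
    by apply: eq_bigr => i _; rewrite !M.
  rewrite P1 P2.
  ring.
rewrite -big_distrr /=; congr (_ * _).
rewrite exchange_big /=; apply: eq_bigr => mu _.
rewrite exchange_big /=; apply: eq_bigr => nu _.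
rewrite -big_distrr /= -mulrA; congr (_ * _).
rewrite (sum_config (fun b => phi psi mu b * (phi psi nu b)^*)
  (fun i s t => (((qS i \in B) ==> ~~ s)%:R * ((qN i \in B) ==> ~~ t)%:R *
    (pauli C mu (mrg B u (qS i) s) (mrg B u (qN i) t) *
     (pauli C nu (mrg B v (qS i) s) (mrg B v (qN i) t))^*)))).
by [].
Qed.

Definition lam (mu nu : nat) : nat :=
  match mu, nu with
  | 0, x => x | x, 0 => x
  | 1, 2 => 3 | 2, 1 => 3 | 1, 3 => 2 | 3, 1 => 2 | 2, 3 => 1 | 3, 2 => 1
  | _, _ => 0 end%N.

Definition kS (C : numClosedFieldType) (mu nu : nat) : C :=
  match mu, nu with
  | 1%N, 2%N => 'i | 2%N, 1%N => - 'i | 1%N, 3%N => - 'i | 3%N, 1%N => 'i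
  | 2%N, 3%N => 'i | 3%N, 2%N => - 'i
  | _, _ => 1 end.

Definition kN (C : numClosedFieldType) (mu nu : nat) : C :=
  kS C nu mu * (if lam mu nu == 2%N then -1 else 1).

Lemma Tf_S (C : numClosedFieldType) n (B : {set qubit n}) (u v : config n) (mu nu : 'I_4) (i : 'I_n) :
  qS i \in B -> qN i \notin B ->
  Tf C B u v mu nu i = kS C mu nu * pauli C (lam mu nu) (u (qS i)) (v (qS i)).
Proof.
move=> hS hN; rewrite /Tf /mrg hS (negbTE hN) /= !big_bool /=.
case: (u (qS i)); case: (v (qS i));
case: mu => [[|[|[|[|//]]]] ?]; case: nu => [[|[|[|[|//]]]] ?] /=;
rewrite ?rmorphN ?rmorph1 ?rmorph0 /= ?conjCi; ring: (sqrCi C).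
Qed.

Lemma Tf_N (C : numClosedFieldType) n (B : {set qubit n}) (u v : config n) (mu nu : 'I_4) (i : 'I_n) :
  qS i \notin B -> qN i \in B ->
  Tf C B u v mu nu i = kN C mu nu * pauli C (lam mu nu) (u (qN i)) (v (qN i)).
Proof.
move=> hS hN; rewrite /Tf /kN /mrg hN (negbTE hS) /= !big_bool /=.
case: (u (qN i)); case: (v (qN i));
case: mu => [[|[|[|[|//]]]] ?]; case: nu => [[|[|[|[|//]]]] ?] /=;
rewrite ?rmorphN ?rmorph1 ?rmorph0 /= ?conjCi; ring: (sqrCi C).
Qed.

Lemma Tf_out (C : numClosedFieldType) n (B : {set qubit n}) (u v : config n) (mu nu : 'I_4) (i : 'I_n) :
  qS i \notin B -> qN i \notin B ->
  Tf C B u v mu nu i = (mu == nu)%:R * 2.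
Proof.
move=> hS hN; rewrite /Tf /mrg (negbTE hN) (negbTE hS) /= !big_bool /=.
case: mu => [[|[|[|[|//]]]] ?]; case: nu => [[|[|[|[|//]]]] ?] /=;
rewrite ?rmorphN ?rmorph1 ?rmorph0 /= ?conjCi; ring: (sqrCi C).
Qed.

Lemma Mm_diag (C : numClosedFieldType) (psi : bool -> C) (mu : 'I_4) :
  normalized psi -> Mm psi mu mu = 1.
Proof.
rewrite /normalized !normCK => H.
rewrite /Mm /phi !big_bool /= -H.
case: mu => [[|[|[|[|//]]]] ?] /=;
rewrite ?rmorphD ?rmorphM ?rmorphN ?rmorph1 ?rmorph0 /= ?conjCi; ring: (sqrCi C).
Qed.

Lemma pow4 (C : numClosedFieldType) (x : C) a r : x ^+ 4 = 1 -> x ^+ (4 * a + r) = x ^+ r.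
Proof. by move=> h; rewrite exprD exprM h expr1n mul1r. Qed.

Lemma i4 (C : numClosedFieldType) : 'i ^+ 4 = 1 :> C.
Proof. by rewrite (_ : 4 = 2 * 2)%N // exprM sqrCi sqrrN expr1n. Qed.

Lemma ni4 (C : numClosedFieldType) : (- 'i) ^+ 4 = 1 :> C.
Proof. by rewrite (_ : 4 = 2 * 2)%N // exprM sqrrN sqrCi sqrrN expr1n. Qed.

Lemma kS4 (C : numClosedFieldType) mu nu : kS C mu nu ^+ 4 = 1.
Proof.
rewrite /kS; case: mu => [|[|[|[|?]]]]; case: nu => [|[|[|[|?]]]];
  rewrite ?expr1n ?i4 ?ni4 //.
Qed.

Lemma kN4 (C : numClosedFieldType) mu nu : kN C mu nu ^+ 4 = 1.
Proof.
rewrite /kN exprMn kS4 mul1r; case: (_ == _); rewrite ?expr1n //.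
by rewrite (_ : 4 = 2 * 2)%N // exprM sqrrN !expr1n.
Qed.

Definition ainv (C : numClosedFieldType) (n mu : nat) : C :=
  match mu with
  | 0%N => 1
  | 2%N => - ((- 'i) ^+ n.+1)
  | _ => - 'i
  end.

Lemma alpha_inv (C : numClosedFieldType) n mu : (alpha C n mu)^-1 = ainv C n mu.
Proof.
rewrite /alpha /ainv; case: mu => [|[|[|?]]]; rewrite ?invr1 ?invCi //.
by rewrite invrN -exprVn invCi.
Qed.

Lemma sgn_half (C : numClosedFieldType) k m : (0 < m)%N ->
  (-1) ^+ ((4 * k + m).-1./2) = (-1) ^+ ((m.-1)./2) :> C.
Proof.
move=> hm; rewrite (_ : (4 * k + m).-1./2 = 2 * k + (m.-1)./2)%N; last by lia.
by rewrite exprD exprM sqrrN expr1n expr1n mul1r.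
Qed.

Lemma conj_niX (C : numClosedFieldType) k : ((- 'i) ^+ k)^* = 'i ^+ k :> C.
Proof. by rewrite rmorphXn rmorphN /= conjCi opprK. Qed.

Lemma final (C : numClosedFieldType) (p q : nat) (D : nat -> C) (psi : bool -> C) :
  normalized psi ->
  \sum_(mu < 4) \sum_(nu < 4) ((alpha C (p + q) mu)^-1 * ((alpha C (p + q) nu)^-1)^*) * Mm psi mu nu *
     (kS C mu nu ^+ p * kN C mu nu ^+ q * D (lam mu nu))
  = 4 * (D 0%N + (if odd (p + q) && odd p then (-1) ^+ ((p + q).-1)./2 else 0) * blochY psi * D 2%N).
Proof.
rewrite /normalized !normCK => Hn.
have Hn' : psi false * (psi false)^* = 1 - psi true * (psi true)^*.
  by rewrite -Hn addrK.
have [a [r [hr ->]]] : exists a r, (r < 4)%N /\ p = (4 * a + r)%N.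
  exists (p %/ 4)%N, (p %% 4)%N; split; first by rewrite ltn_pmod.
  by rewrite {1}(divn_eq p 4) mulnC.
have [b [s [hs ->]]] : exists a r, (r < 4)%N /\ q = (4 * a + r)%N.
  exists (q %/ 4)%N, (q %% 4)%N; split; first by rewrite ltn_pmod.
  by rewrite {1}(divn_eq q 4) mulnC.
rewrite (_ : (4 * a + r + (4 * b + s)) = 4 * (a + b) + (r + s))%N; last by lia.
have odd4 x y : odd (4 * x + y) = odd y by rewrite oddD oddM.
rewrite !odd4.
move: (a + b)%N => k.
under eq_bigr => mu _ do under eq_bigr => nu _ do
  rewrite (pow4 _ _ (kS4 _ _ _)) (pow4 _ _ (kN4 _ _ _)) !alpha_inv /ainv -addnS.
rewrite !big_ord_recl !big_ord0 /= !addr0.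
rewrite /Mm /phi /blochY /kS /kN /lam !big_bool /=.
rewrite /bump /= ?addn0 ?add1n.
rewrite ?rmorphD ?rmorphM ?rmorphXn ?rmorphN ?rmorph1 ?rmorph0 /= ?conjCi ?opprK ?conj_niX.
rewrite ?(pow4 _ _ (ni4 _)) ?(pow4 _ _ (i4 _)).
case: r hr => [|[|[|[|//]]]] _; case: s hs => [|[|[|[|//]]]] _;
  (try (rewrite sgn_half; last done)); rewrite /= ?addn0 ?add1n ?addnS ?add0n.
all: ring: (sqrCi C) Hn'.
Qed.

Lemma Kc4 (C : numClosedFieldType) n : Kc C n * 4 = (2 ^+ n)^-1.
Proof.
rewrite /Kc geC0_conj; last first.
  by rewrite mulr_ge0 ?invr_ge0 ?exprn_ge0 ?invr_ge0 ?sqrtC_ge0 ?ler0n.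
have s0 : sqrtC 2 != 0 :> C by rewrite sqrtC_eq0 pnatr_eq0.
have e : (2 : C) ^+ n = (sqrtC 2 ^+ n) ^+ 2 by rewrite -exprM mulnC exprM sqrtCK.
rewrite e exprVn.
have t0 : sqrtC 2 ^+ n != 0 :> C by rewrite expf_neq0.
move: (sqrtC 2 ^+ n) t0 => t t0.
by field.
Qed.


Lemma card_le n (B : {set qubit n}) : qA n \notin B ->
  (forall i, ~~ ((qS i \in B) && (qN i \in B))) -> (#|B| <= n)%N.
Proof.
move=> hA hx.
pose g := fun i : 'I_n => if qS i \in B then qS i else qN i.
apply: (@leq_trans #|[set g i | i : 'I_n]|); last first.
  by rewrite (leq_trans (leq_imset_card _ _)) // card_ord.
apply: subset_leq_card; apply/subsetP => -[[i b]|] hq; last by rewrite hq in hA.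
apply/imsetP; exists i => //; rewrite /g.
case: b hq => hq.
  have := hx i; rewrite hq andbT => /negbTE ->; by [].
by rewrite /qS hq.
Qed.


Lemma structB n (B : {set qubit n}) : qA n \notin B ->
  (forall i, qS i \in B \/ qN i \in B) -> #|B| = n ->
  B = [set (if qS i \in B then qS i else qN i) | i : 'I_n] /\
  (forall i, qS i \in B -> qN i \notin B).
Proof.
move=> hA hit hc.
set g := fun i : 'I_n => if qS i \in B then qS i else qN i.
have ginj : injective g.
  by move=> i j; rewrite /g /qS /qN; do 2 case: ifP => _; case.
have HB : B = [set g i | i : 'I_n].
  apply/eqP; rewrite eq_sym eqEcard; apply/andP; split.
    apply/subsetP => q /imsetP [i _ ->]; rewrite /g; case: ifP => // /negbT hS.
    by case: (hit i) => //; rewrite (negbTE hS).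
  by rewrite card_imset // card_ord hc.
split=> // i hS; apply/negP => hN.
move: hN; rewrite {1}HB => /imsetP [j _].
rewrite /g; case: ifP => hj; first by rewrite /qS /qN.
by rewrite /qN => -[e]; subst j; rewrite hS in hj.
Qed.

Lemma part2 (C : numClosedFieldType) n (B : {set qubit n}) (psi : bool -> C) (u v : config n) :
  qA n \notin B -> (forall i, qS i \in B \/ qN i \in B) -> #|B| = n -> normalized psi ->
  let p := #|[set i : 'I_n | qS i \in B]| in
  reduced psi B u v = 2^-n * (\prod_(q in B) pauli C 0 (u q) (v q) +
     (if odd n && odd p then (-1) ^+ (n.-1)./2 else 0) * blochY psi *
       \prod_(q in B) pauli C 2 (u q) (v q)).
Proof.
move=> hA hit hc hpsi p.
have [HB Hx] := structB hA hit hc.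
set g := fun i : 'I_n => if qS i \in B then qS i else qN i.
have ginj : injective g.
  by move=> i j; rewrite /g /qS /qN; do 2 case: ifP => _; case.
have PB l : \prod_(q in B) pauli C l (u q) (v q) = \prod_(i < n) pauli C l (u (g i)) (v (g i)).
  rewrite {1}HB big_imset /=; last by move=> i j _ _; apply: ginj.
  by apply: eq_bigl.
have hp : (p <= n)%N by rewrite /p -[X in (_ <= X)%N](card_ord n) max_card.
have PT (mu nu : 'I_4) : \prod_(i < n) Tf C B u v mu nu i =
    kS C mu nu ^+ p * kN C mu nu ^+ (n - p) *
    \prod_(i < n) pauli C (lam mu nu) (u (g i)) (v (g i)).
  rewrite (eq_bigr (fun i => (if qS i \in B then kS C mu nu else kN C mu nu) *
      pauli C (lam mu nu) (u (g i)) (v (g i)))); last first.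
    move=> i _; rewrite /g; case: ifP => hS.
      by rewrite Tf_S // Hx.
    rewrite Tf_N ?hS //; by case: (hit i); rewrite ?hS.
  rewrite big_split /=; congr (_ * _).
  rewrite (bigID (fun i => qS i \in B)) /=.
  rewrite (eq_bigr (fun _ => kS C mu nu)); last by move=> i ->.
  rewrite [X in _ * X](eq_bigr (fun _ => kN C mu nu)); last by move=> i /negbTE ->.
  rewrite (eq_bigl (fun i => i \in [set i : 'I_n | qS i \in B])); last by move=> i; rewrite inE.
  rewrite [X in _ * X](eq_bigl (fun i => i \in ~: [set i : 'I_n | qS i \in B])); last first.
    by move=> i; rewrite !inE.
  rewrite !prodr_const; congr (_ * _ ^+ _).
  have hC := cardsC [set i : 'I_n | qS i \in B].
  rewrite card_ord -/p in hC; lia.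
rewrite reduced_formula //.
have F := final p (n - p) (fun l => \prod_(i < n) pauli C l (u (g i)) (v (g i))) hpsi.
rewrite subnKC // in F.
rewrite !PB -Kc4 -[Kc C n * 4 * _]mulrA -F; congr (_ * _).
apply: eq_bigr => mu _; apply: eq_bigr => nu _; by rewrite PT.
Qed.


Lemma D2_neq0 (C : numClosedFieldType) n (B : {set qubit n}) :
  \prod_(q in B) pauli C 2 ([ffun _ => false] q) ([ffun _ => true] q) != 0.
Proof.
rewrite (eq_bigr (fun _ => - 'i)); last by move=> q _; rewrite !ffunE.
rewrite prodr_const expf_neq0 // oppr_eq0; apply/eqP => h.
by have := sqrCi C; rewrite h expr0n /= => /eqP; rewrite eq_sym oppr_eq0 oner_eq0.
Qed.

Definition psi0 (C : numClosedFieldType) (b : bool) : C := if b then 0 else 1.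
Definition psi1 (C : numClosedFieldType) (b : bool) : C := if b then 4 / 5 * 'i else 3 / 5.

Lemma norm_psi0 (C : numClosedFieldType) : normalized (psi0 C).
Proof. by rewrite /normalized /psi0 normr1 normr0 expr1n expr0n /= addr0. Qed.

Lemma c35 (C : numClosedFieldType) : (3 / 5 : C)^* = 3 / 5.
Proof. by rewrite geC0_conj // divr_ge0 ?ler0n. Qed.
Lemma c45 (C : numClosedFieldType) : (4 / 5 : C)^* = 4 / 5.
Proof. by rewrite geC0_conj // divr_ge0 ?ler0n. Qed.

Lemma norm_psi1 (C : numClosedFieldType) : normalized (psi1 C).
Proof.
rewrite /normalized /psi1 !normCK c35 rmorphM /= c45 conjCi.
have h5 : (5 : C) != 0 by rewrite pnatr_eq0.
field: (sqrCi C); by [].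
Qed.

Lemma y0 (C : numClosedFieldType) : blochY (psi0 C) = 0.
Proof.
rewrite /blochY /psi0 !big_bool /= ?rmorph0 ?rmorph1; ring.
Qed.

Lemma y1 (C : numClosedFieldType) : blochY (psi1 C) = 24 / 25.
Proof.
rewrite /blochY /psi1 !big_bool /= c35 rmorphM /= c45 conjCi.
have h5 : (5 : C) != 0 by rewrite pnatr_eq0.
field: (sqrCi C); by [].
Qed.

Unset Implicit Arguments.

Theorem proposition2 (C : numClosedFieldType) (n : nat) (B : {set qubit n}) :
  (0 < n)%N -> qA n \notin B ->
  ((exists i : 'I_n, qS i \notin B /\ qN i \notin B) -> uninformative C B) /\
  ((forall i : 'I_n, qS i \in B \/ qN i \in B) ->
     ((n < #|B|)%N -> authorized B) /\
     (#|B| = n ->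
        let p := #|[set i : 'I_n | qS i \in B]| in
        (~~ odd n -> uninformative C B) /\
        (odd n -> ~~ odd p -> uninformative C B) /\
        (odd n -> odd p ->
           partially_informative C B /\
           forall psi : bool -> C, normalized psi ->
             forall u v : config n,
               reduced psi B u v =
               2^-n * (\prod_(q in B) pauli C 0 (u q) (v q)
                       + (-1) ^+ (n.-1)./2 * blochY psi
                         * \prod_(q in B) pauli C 2 (u q) (v q))))).
Proof.
move=> npos hA; split.
  move=> [i0 [hS hN]] psi psi' Hp Hp' u v.
  rewrite !reduced_formula //; congr (_ * _).
  apply: eq_bigr => mu _; apply: eq_bigr => nu _.
  case: (eqVneq mu nu) => [<-|hne]; first by rewrite !Mm_diag.
  by rewrite (bigD1 i0) //= Tf_out // (negbTE hne) /= !mul0r !mulr0.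
move=> hit; split.
  move=> hlt.
  case: (boolP [exists j, (qS j \in B) && (qN j \in B)]) => [/existsP [j /andP [h1 h2]]|hne].
    by exists j; split => //; split.
  move/existsPn: hne => hne.
  by have := card_le hA hne; rewrite leqNgt hlt.
move=> hc p.
have key := fun psi u v Hp => @part2 C n B psi u v hA hit hc Hp.
split; [|split].
- move=> hn psi psi' Hp Hp' u v.
  by rewrite (key psi u v Hp) (key psi' u v Hp') (negbTE hn) /= !mul0r.
- move=> hn hp psi psi' Hp Hp' u v.
  by rewrite (key psi u v Hp) (key psi' u v Hp') (negbTE hp) andbF /= !mul0r.
move=> hn hp; split; last first.
  by move=> psi Hp u v; rewrite (key psi u v Hp) hn hp.
split.
  move=> [j [h1 [h2 _]]].
  have [_ Hx] := structB hA hit hc.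
  by move: (Hx j h1); rewrite h2.
exists (psi0 C), (psi1 C); split; first exact: norm_psi0.
split; first exact: norm_psi1.
exists [ffun _ => false], [ffun _ => true].
rewrite (key _ _ _ (norm_psi0 C)) (key _ _ _ (norm_psi1 C)) hn hp /= y0 y1.
set D0 := \prod_(q in B) _.
set D2 := \prod_(q in B) _.
have hD2 : D2 != 0 by apply: D2_neq0.
move=> E.
have : 2^-n * (-1) ^+ (n.-1)./2 * (24 / 25) * D2 = 0 :> C.
  have : 2^-n * (D0 + (-1) ^+ (n.-1)./2 * (24 / 25) * D2) - 2^-n * (D0 + (-1) ^+ (n.-1)./2 * 0 * D2) = 0 :> C.
    by rewrite E subrr.
  move=> h; rewrite -h; ring.
move/eqP; apply/negP; rewrite !mulf_neq0 ?signr_eq0 ?invr_eq0 ?expf_neq0 ?pnatr_eq0 //.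
Qed.
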